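(* Let $\mathcal L$ be a class of modules and $M$ a module. (1) If every finite subset of $M$ is contained in an $\mathcal L$-pure submodule of $M$ that is $\mathcal L$-atomic, then $M$ is $\mathcal L$-atomic (hence $\langle\mathcal L\rangle$-atomic). (2) If every finite subset of $M$ is contained in a locally split submodule of $M$ that is strict $\mathcal L$-atomic, then $M$ is strict $\mathcal L$-atomic. (3) If every finite subset of $M$ is contained in a locally split submodule of $M$ that is countably generated and strict $\mathcal L$-atomic, then $M$ is strict $\langle\mathcal L\rangle$-atomic.
   Context: $R$ is a ring with $1$; modules are left $R$-modules; $\mathcal L$ is nonempty. pp formulas, $\phi(M)$, ${\rm pp}_M(\bar m)$ as usual; $\phi\le_{\mathcal L}\psi$ means $\phi(L)\subseteq\psi(L)$ for all $L\in\mathcal L$; $\langle\mathcal L\rangle$ is the definable subcategory generated by $\mathcal L$ (modules $N$ with $\phi(N)\subseteq\psi(N)$ whenever $\phi\le_{\mathcal L}\psi$). $M$ is $\mathcal L$-atomic if for every finite tuple $\bar m$ in $M$ there is $\phi\in{\rm pp}_M(\bar m)$ with $\phi\le_{\mathcal L}\psi$ for all $\psi\in{\rm pp}_M(\bar m)$. A submodule $N\subseteq M$ is $\mathcal L$-pure if for every tuple $\bar n$ in $N$ and pp $\phi$ with $\bar n\in\phi(M)$ there is pp $\psi\le_{\mathcal L}\phi$ with $\bar n\in\psi(N)$. $N\subseteq M$ is locally split if for every finite tuple $\bar n$ in $N$ there is a homomorphism $g:M\to N$ with $g(\bar n)=\bar n$. $(M,\bar m)$ is an $\mathcal L$-free realization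 of pp $\phi$ if $\bar m\in\phi(M)$ and for all $L\in\mathcal L$, $\bar c\in\phi(L)$ there is a homomorphism $M\to L$ sending $\bar m$ to $\bar c$; $M$ is strict $\mathcal L$-atomic if every finite tuple in $M$ is an $\mathcal L$-free realization of some pp formula. *)

(* Defs.v *)
From HB Require Import structures.
From mathcomp Require Import all_boot all_algebra.
Set Implicit Arguments. Unset Strict Implicit. Unset Printing Implicit Defensive.
Import GRing.Theory.
Local Open Scope ring_scope.

Section PP.
Variable R : pzRingType.

Definition modclass := lmodType R -> Prop.

(* A pp formula in n free variables: exists ybar (of length k),
   H (xbar ybar)^T = 0, where H is an m x (n+k) matrix over R. *)
Record ppf (n : nat) := PPF {
  pp_m : nat;
  pp_k : nat;
  pp_H : 'M[R]_(pp_m, n + pp_k) }.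

Definition catv (M : lmodType R) n k (x : 'I_n -> M) (y : 'I_k -> M)
  (j : 'I_(n + k)) : M :=
  match split j with inl a => x a | inr b => y b end.

Definition pp_holds (M : lmodType R) n (phi : ppf n) (x : 'I_n -> M) : Prop :=
  exists y : 'I_(pp_k phi) -> M,
    forall i : 'I_(pp_m phi),
      \sum_(j < n + pp_k phi) pp_H phi i j *: catv x y j = 0.

Definition ple (L : modclass) n (phi psi : ppf n) : Prop :=
  forall N : lmodType R, L N ->
    forall x : 'I_n -> N, pp_holds phi x -> pp_holds psi x.

(* <L> : the definable subcategory generated by L *)
Definition defcat (L : modclass) : modclass := fun N =>
  forall n (phi psi : ppf n), ple L phi psi ->
    forall x : 'I_n -> N, pp_holds phi x -> pp_holds psi x.

Definition atomic (L : modclass) (M : lmodType R) : Prop :=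
  forall n (m : 'I_n -> M), exists phi : ppf n,
    pp_holds phi m /\ forall psi : ppf n, pp_holds psi m -> ple L phi psi.

Definition pure (L : modclass) (N M : lmodType R) (i : {linear N -> M}) : Prop :=
  forall n (x : 'I_n -> N) (phi : ppf n), pp_holds phi (fun a => i (x a)) ->
    exists psi : ppf n, ple L psi phi /\ pp_holds psi x.

Definition locally_split (N M : lmodType R) (i : {linear N -> M}) : Prop :=
  forall n (x : 'I_n -> N), exists g : {linear M -> N},
    forall a, g (i (x a)) = x a.

Definition free_realization (L : modclass) (M : lmodType R) n
    (phi : ppf n) (m : 'I_n -> M) : Prop :=
  pp_holds phi m /\
  forall N : lmodType R, L N -> forall c : 'I_n -> N, pp_holds phi c ->
    exists h : {linear M -> N}, forall a, h (m a) = c a.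

Definition strict_atomic (L : modclass) (M : lmodType R) : Prop :=
  forall n (m : 'I_n -> M), exists phi : ppf n, free_realization L phi m.

Definition countably_generated (N : lmodType R) : Prop :=
  exists f : nat -> N, forall x : N,
    exists n (r : 'I_n -> R), x = \sum_(a < n) r a *: f a.

Definition contains_tuple (N M : lmodType R) (i : N -> M) n (x : 'I_n -> M) :=
  forall a, exists y : N, i y = x a.

End PP.

(* Main.v *)
Require Import Defs.
From HB Require Import structures.
From mathcomp Require Import all_boot all_algebra.
From Stdlib Require Import ClassicalEpsilon FunctionalExtensionality.
Set Implicit Arguments. Unset Strict Implicit. Unset Printing Implicit Defensive.
Import GRing.Theory.
Local Open Scope ring_scope.

Section Aux.
Variable R : pzRingType.

Definition mklin (U V : lmodType R) (h : U -> V) (H : linear h) : {linear U -> V} :=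
  HB.pack h (GRing.isLinear.Build R U V *:%R h H).

Lemma mklinE (U V : lmodType R) (h : U -> V) (H : linear h) x : mklin H x = h x.
Proof. by []. Qed.

Lemma comp_linear (U V W : lmodType R) (f : {linear U -> V}) (g : {linear V -> W}) :
  linear (fun x => g (f x)).
Proof. by move=> a u v; rewrite linearP linearP. Qed.

Lemma catv_nat (M : lmodType R) n k (X Y : nat -> M) (j : 'I_(n + k)) :
  catv (fun a : 'I_n => X a) (fun b : 'I_k => Y b) j =
  if (j < n)%N then X j else Y (j - n)%N.
Proof.
rewrite /catv; case: splitP => [a ->|b ->] //.
by rewrite addKn.
Qed.

Lemma pp_hom (M N : lmodType R) (f : {linear M -> N}) n (phi : ppf R n) x :
  pp_holds phi x -> pp_holds phi (fun a => f (x a)).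
Proof.
case=> y Hy; exists (fun b => f (y b)) => i.
rewrite (eq_bigr (fun j => f (pp_H phi i j *: catv x y j))); last first.
  by move=> j _; rewrite linearZ /catv; case: split.
by rewrite -linear_sum Hy linear0.
Qed.
End Aux.

Section P12.
Variable R : pzRingType.

Lemma tuple_choice (N M : lmodType R) (i : N -> M) n (x : 'I_n -> M) :
  contains_tuple i x -> exists y : 'I_n -> N, forall a, i (y a) = x a.
Proof.
move=> H; exists (fun a => proj1_sig (constructive_indefinite_description _ (H a))).
by move=> a; case: (constructive_indefinite_description _ _).
Qed.

Lemma fr_type (L : modclass R) (N : lmodType R) n (phi : ppf R n) (y : 'I_n -> N)
  (FR : free_realization L phi y) (N' : lmodType R) (D : defcat L N') (c : 'I_n -> N') :
  pp_holds phi c -> forall psi, pp_holds psi y -> pp_holds psi c.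
Proof.
move=> Hc psi Hpsi; apply: (D n phi psi) Hc => L0 HL0 x Hx.
case: FR => _ /(_ L0 HL0 x Hx) [h Hh].
have := pp_hom h Hpsi.
by have -> : (fun a => h (y a)) = x by apply: functional_extensionality.
Qed.

Lemma atomic_defcat (L : modclass R) (M : lmodType R) : atomic L M -> atomic (defcat L) M.
Proof.
move=> A n m; case: (A n m) => phi [H1 H2]; exists phi; split => // psi Hpsi N DN x Hx.
exact: (DN n phi psi (H2 psi Hpsi)).
Qed.

Lemma part1 (L : modclass R) (M : lmodType R) :
  (forall n (x : 'I_n -> M), exists (N : lmodType R) (i : {linear N -> M}),
       injective i /\ contains_tuple i x /\ pure L i /\ atomic L N) ->
     atomic L M.
Proof.
move=> H n m; case: (H n m) => N [i [_ [ct [pu At]]]].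
case: (tuple_choice ct) => y Hy.
have Em : m = (fun a => i (y a)) by apply: functional_extensionality => a; rewrite Hy.
case: (At n y) => phi [Hphi Hall]; exists phi; split.
  by rewrite Em; apply: pp_hom.
move=> psi; rewrite Em => /pu [psi' [Hle Hpsi']].
move=> L0 HL0 x Hx; exact: (Hle L0 HL0 x (Hall psi' Hpsi' L0 HL0 x Hx)).
Qed.

Lemma part2 (L : modclass R) (M : lmodType R) :
  (forall n (x : 'I_n -> M), exists (N : lmodType R) (i : {linear N -> M}),
       injective i /\ contains_tuple i x /\ locally_split i /\
       strict_atomic L N) ->
     strict_atomic L M.
Proof.
move=> H n m; case: (H n m) => N [i [_ [ct [ls sa]]]].
case: (tuple_choice ct) => y Hy.
have Em : m = (fun a => i (y a)) by apply: functional_extensionality => a; rewrite Hy.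
case: (sa n y) => phi [Hphi Hfr]; exists phi; split.
  by rewrite Em; apply: pp_hom.
move=> N' HN' c Hc; case: (Hfr N' HN' c Hc) => h Hh.
case: (ls n y) => g Hg.
exists (mklin (comp_linear g h)) => a; rewrite mklinE Em Hg Hh //.
Qed.
End P12.

Section P3.
Variable R : pzRingType.

Definition Typ (N N' : lmodType R) p (z : nat -> N) (w : nat -> N') :=
  forall psi : ppf R p, pp_holds psi (fun a : 'I_p => z a) ->
     pp_holds psi (fun a : 'I_p => w a).

Definition upd (N : lmodType R) (w : nat -> N) p v := fun j => if j == p then v else w j.

Lemma ppE (M : lmodType R) p (phi : ppf R p) (x : nat -> M) :
  pp_holds phi (fun a : 'I_p => x a) <->
  exists Y : nat -> M, forall i, \sum_(j < p + pp_k phi)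
     pp_H phi i j *: (if (j < p)%N then x j else Y (j - p)%N) = 0.
Proof.
split.
  case=> y Hy.
  exists (fun j => if @insub _ (fun j => j < pp_k phi)%N _ j is Some b then y b else 0) => i.
  rewrite -[RHS](Hy i); apply: eq_bigr => j _.
  rewrite /catv; case: splitP => [a ->|b ->]; first by [].
  by rewrite addKn valK.
case=> Y HY; exists (fun b => Y b) => i; rewrite -[RHS](HY i); apply: eq_bigr => j _.
by rewrite catv_nat.
Qed.

Definition proj p (Phi : ppf R p.+1) : ppf R p :=
  @PPF R p (pp_m Phi) (pp_k Phi).+1 (\matrix_(i, j) pp_H Phi i (inord j)).

Lemma proj_sum (M : lmodType R) p (Phi : ppf R p.+1) i (G : nat -> M) :
  \sum_(j < p + pp_k (proj Phi)) pp_H (proj Phi) i j *: G j =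
  \sum_(j < p.+1 + pp_k Phi) pp_H Phi i j *: G j.
Proof.
rewrite (eq_bigr (fun j : 'I_(p + (pp_k Phi).+1) =>
   (fun jn => pp_H Phi i (inord jn) *: G jn) (nat_of_ord j))); last first.
  by move=> j _; rewrite /= mxE.
rewrite [RHS](eq_bigr (fun j : 'I_(p.+1 + pp_k Phi) =>
   (fun jn => pp_H Phi i (inord jn) *: G jn) (nat_of_ord j))); last first.
  by move=> j _; rewrite inord_val.
set F := (fun jn => pp_H Phi i (inord jn) *: G jn). rewrite -(big_mkord xpredT F) -(big_mkord xpredT F). by rewrite addSnnS.
Qed.

Lemma extend (L : modclass R) (N : lmodType R) (SA : strict_atomic L N)
  (N' : lmodType R) (D : defcat L N') p (z : nat -> N) (w : nat -> N') :
  Typ p z w -> exists v', Typ p.+1 z (upd w p v').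
Proof.
move=> T.
case: (SA p.+1 (fun a => z a)) => Phi FR.
have HA : pp_holds (proj Phi) (fun a : 'I_p => z a).
  case: (FR) => /ppE [Y HY] _; apply/ppE.
  exists (fun j => if j == 0%N then z p else Y j.-1) => i.
  rewrite (proj_sum i (fun j => if (j < p)%N then z j else if (j - p)%N == 0%N then z p else Y (j - p).-1)).
  rewrite -[RHS](HY i); apply: eq_bigr => j _; congr (_ *: _).
  case: (ltngtP j p) => [jp|pj|->]; first by rewrite ltnS ltnW.
    by rewrite ltnS leqNgt pj /= subn_eq0 leqNgt pj /= subnS.
  by rewrite subnn ltnSn.
case/T/ppE: HA => Y' HY'.
exists (Y' 0%N); apply: (fr_type FR D).
apply/ppE; exists (fun j => Y' j.+1) => i.
rewrite -[RHS](HY' i) (proj_sum i (fun j => if (j < p)%N then w j else Y' (j - p)%N)).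
apply: eq_bigr => j _; congr (_ *: _).
rewrite /upd; case: (ltngtP j p) => [jp|pj|->].
- by rewrite ltnS ltnW // (ltn_eqF jp).
- by rewrite ltnS leqNgt pj /= subnSK.
- by rewrite ltnSn subnn.
Qed.
End P3.

Section P3b.
Variable R : pzRingType.

Lemma sum_addn0 (V : zmodType) P (F : nat -> V) :
  \sum_(j < P + 0) F j = \sum_(j < P) F j.
Proof. by rewrite -!(big_mkord xpredT F) addn0. Qed.

Definition rel P (s : nat -> R) : ppf R P := @PPF R P 1 0 (\matrix_(i, j) s j).

Lemma rel_typ (N N' : lmodType R) P (z : nat -> N) (w : nat -> N') :
  Typ P z w -> forall s : nat -> R,
  \sum_(j < P) s j *: z j = 0 -> \sum_(j < P) s j *: w j = 0.
Proof.
move=> T s Hz.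
have : pp_holds (rel P s) (fun a : 'I_P => z a).
  apply/ppE; exists (fun _ => 0) => i.
  rewrite (eq_bigr (fun j : 'I_(P + 0) => (fun jn => s jn *: (if (jn < P)%N then z jn else 0)) (nat_of_ord j))); last by move=> j _; rewrite mxE.
  rewrite (@sum_addn0 _ P (fun jn => s jn *: (if (jn < P)%N then z jn else 0))) -[RHS]Hz; apply: eq_bigr => j _; by rewrite ltn_ord.
case/T/ppE => Y /(_ ord0).
rewrite (eq_bigr (fun j : 'I_(P + 0) => (fun jn => s jn *: (if (jn < P)%N then w jn else Y (jn - P)%N)) (nat_of_ord j))); last by move=> j _; rewrite mxE.
rewrite (@sum_addn0 _ P (fun jn => s jn *: (if (jn < P)%N then w jn else Y (jn - P)%N))) => H0; rewrite -[RHS]H0; apply: eq_bigr => j _; by rewrite ltn_ord.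
Qed.

Definition ext0 (s : nat -> R) P j := if (j < P)%N then s j else 0.

Lemma widen_sum (V : lmodType R) P Q (s : nat -> R) (v : nat -> V) : (P <= Q)%N ->
  \sum_(j < Q) ext0 s P j *: v j = \sum_(j < P) s j *: v j.
Proof.
move=> PQ; rewrite (big_ord_widen _ (fun j => s j *: v j) PQ) [RHS]big_mkcond.
by apply: eq_bigr => j _; rewrite /ext0; case: ifP => _; rewrite ?scale0r.
Qed.

Lemma delta_sum (V : lmodType R) Q (v : nat -> V) a : (a < Q)%N ->
  \sum_(j < Q) (if nat_of_ord j == a then 1 else 0) *: v j = v a.
Proof.
move=> aQ; rewrite (bigD1 (Ordinal aQ)) //= eqxx scale1r big1 ?addr0 //.
by move=> j; rewrite -val_eqE /= => /negbTE ->; rewrite scale0r.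
Qed.

Fixpoint Wseq (N' : lmodType R) (w0 : nat -> N') (E : nat -> (nat -> N') -> N') n k :=
  match k with
  | 0 => w0
  | k'.+1 => upd (Wseq w0 E n k') (n + k') (E (n + k') (Wseq w0 E n k'))
  end.

Lemma Wseq_stab (N' : lmodType R) w0 E n k d j : (j < n + k)%N ->
  @Wseq N' w0 E n (k + d) j = Wseq w0 E n k j.
Proof.
move=> jk; elim: d => [|d IH]; first by rewrite addn0.
rewrite addnS /= /upd IH; case: eqP => // E1.
by move: jk; rewrite E1 ltn_add2l ltnNge leq_addr.
Qed.

Lemma main3 (L : modclass R) (N : lmodType R) (SA : strict_atomic L N)
  (CG : countably_generated N) (N' : lmodType R) (D : defcat L N')
  n (y : 'I_n -> N) (phi : ppf R n) (FR : free_realization L phi y)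
  (c : 'I_n -> N') (Hc : pp_holds phi c) :
  exists h : {linear N -> N'}, forall a, h (y a) = c a.
Proof.
case: CG => f Hf.
pose u j := if (insub j : option 'I_n) is Some a then y a else f (j - n)%N.
pose w0 j := if (insub j : option 'I_n) is Some a then c a else 0.
have Hyu : (fun a : 'I_n => u a) = y.
  by apply: functional_extensionality => a; rewrite /u valK.
have Hcw : (fun a : 'I_n => w0 a) = c.
  by apply: functional_extensionality => a; rewrite /w0 valK.
have T0 : Typ n u w0.
  by move=> psi; rewrite Hyu Hcw; apply: (fr_type FR D Hc).
have Ext : forall (p : nat) (w : nat -> N'), exists v : N', Typ p u w -> Typ p.+1 u (upd w p v).
  move=> p w; case: (classic (Typ p u w)) => H.
    by case: (extend SA D H) => v Hv; exists v.
  by exists 0.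
pose E p w := proj1_sig (constructive_indefinite_description _ (Ext p w)).
have HE : forall p w, Typ p u w -> Typ p.+1 u (upd w p (E p w)).
  by move=> p w; rewrite /E; case: (constructive_indefinite_description _ _).
pose W := Wseq w0 E n.
have TW : forall k, Typ (n + k) u (W k).
  elim=> [|k IH]; first by rewrite addn0.
  by rewrite addnS; apply: HE.
pose w j := W j.+1 j.
have Typw : forall k, Typ (n + k) u w.
  move=> k psi Hpsi.
  have -> : (fun a : 'I_(n + k) => w a) = (fun a => W k a).
    apply: functional_extensionality => a; rewrite /w.
    rewrite /W; case: (leqP a.+1 k) => h.
      have := @Wseq_stab _ w0 E n a.+1 (k - a.+1) a; rewrite subnKC //.
      by move=> -> //; rewrite addnS ltnS leq_addl.
    have := @Wseq_stab _ w0 E n k (a.+1 - k) a; rewrite subnKC ?(ltnW h) //.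
    by move=> -> //.
  exact: TW.
have Rel : forall P (s : nat -> R), \sum_(j < P) s j *: u j = 0 -> \sum_(j < P) s j *: w j = 0.
  move=> P s H0.
  have PQ : (P <= n + P)%N by rewrite leq_addl.
  rewrite -(widen_sum s w PQ); apply: (rel_typ (Typw P)).
  by rewrite widen_sum.
have Rep : forall x, exists ps : nat * (nat -> R), x = \sum_(j < ps.1) ps.2 j *: u j.
  move=> x; case: (Hf x) => q [r ->].
  exists ((n + q)%N, fun j => if (j < n)%N then 0
       else if (insub (j - n)%N : option 'I_q) is Some b then r b else 0) => /=.
  rewrite big_split_ord /= [X in _ = X + _]big1 ?add0r; last first.
    by move=> j _; rewrite /= ltn_ord scale0r.
  apply: eq_bigr => j _; rewrite /= ltnNge leq_addr /= addKn valK /u insubN //.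
    by rewrite addKn.
  by rewrite ltnNge leq_addr.
pose rp x := proj1_sig (constructive_indefinite_description _ (Rep x)).
have Hrp : forall x, x = \sum_(j < (rp x).1) (rp x).2 j *: u j.
  by move=> x; rewrite /rp; case: (constructive_indefinite_description _ _).
pose h x := \sum_(j < (rp x).1) (rp x).2 j *: w j.
have lin : linear h.
  move=> a x z.
  set P1 := (rp x).1; set s1 := (rp x).2; set P2 := (rp z).1; set s2 := (rp z).2.
  set P3 := (rp (a *: x + z)).1; set s3 := (rp (a *: x + z)).2.
  pose Q := (P1 + P2 + P3)%N.
  have L1 : (P1 <= Q)%N by rewrite /Q -addnA leq_addr.
  have L2 : (P2 <= Q)%N by rewrite /Q addnAC leq_addl.
  have L3 : (P3 <= Q)%N by rewrite /Q leq_addl.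
  pose t j := ext0 s3 P3 j - a * ext0 s1 P1 j - ext0 s2 P2 j.
  have combo : forall (V : lmodType R) (v : nat -> V), \sum_(j < Q) t j *: v j =
     \sum_(j < P3) s3 j *: v j - a *: \sum_(j < P1) s1 j *: v j - \sum_(j < P2) s2 j *: v j.
    move=> V v; rewrite -(widen_sum s1 v L1) -(widen_sum s2 v L2) -(widen_sum s3 v L3).
    rewrite scaler_sumr -!sumrB; apply: eq_bigr => j _.
    by rewrite /t !scalerBl scalerA.
  have E0 : a *: x + z - a *: x - z = 0 by rewrite [a *: x + z]addrC addrK subrr.
  have := Rel Q t; rewrite !combo -!Hrp E0 => /(_ erefl) /eqP.
  rewrite -addrA -opprD subr_eq0 => /eqP H; exact: H.
exists (mklin lin) => a; rewrite mklinE.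
have aQ : (a < (rp (y a)).1 + n)%N by rewrite ltn_addl.
pose t j := ext0 (rp (y a)).2 (rp (y a)).1 j - (if j == nat_of_ord a then 1 else 0).
have combo : forall (V : lmodType R) (v : nat -> V), \sum_(j < (rp (y a)).1 + n) t j *: v j =
   \sum_(j < (rp (y a)).1) (rp (y a)).2 j *: v j - v a.
  move=> V v; rewrite -(delta_sum v aQ) -(widen_sum (rp (y a)).2 v (leq_addr n _)) -sumrB.
  by apply: eq_bigr => j _; rewrite /t scalerBl.
have := Rel ((rp (y a)).1 + n)%N t; rewrite !combo -Hrp.
have -> : u a = y a by rewrite /u valK.
rewrite subrr => /(_ erefl) /eqP; rewrite subr_eq0 => /eqP E1; rewrite /h E1.
rewrite /w /W -[a.+1]add0n Wseq_stab /= ?addn0 //.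
by rewrite /w0 valK.
Qed.
End P3b.

Theorem lemma4p3 (R : pzRingType) (L : modclass R) (M : lmodType R)
  (HL : exists L0 : lmodType R, L L0) :
  ((forall n (x : 'I_n -> M), exists (N : lmodType R) (i : {linear N -> M}),
       injective i /\ contains_tuple i x /\ pure L i /\ atomic L N) ->
     atomic L M /\ atomic (defcat L) M)
  /\
  ((forall n (x : 'I_n -> M), exists (N : lmodType R) (i : {linear N -> M}),
       injective i /\ contains_tuple i x /\ locally_split i /\
       strict_atomic L N) ->
     strict_atomic L M)
  /\
  ((forall n (x : 'I_n -> M), exists (N : lmodType R) (i : {linear N -> M}),
       injective i /\ contains_tuple i x /\ locally_split i /\
       countably_generated N /\ strict_atomic L N) ->
     strict_atomic (defcat L) M).
Proof.
split.
  by move=> H; have A := part1 H; split => //; exact: atomic_defcat.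
split; first exact: part2.
move=> H n m; case: (H n m) => N [i [_ [ct [ls [cg sa]]]]].
case: (tuple_choice ct) => y Hy.
have Em : m = (fun a => i (y a)) by apply: functional_extensionality => a; rewrite Hy.
case: (sa n y) => phi FR; exists phi; split.
  by rewrite Em; apply: pp_hom; case: FR.
move=> N' DN' c Hc; case: (main3 sa cg DN' FR Hc) => h Hh.
case: (ls n y) => g Hg.
exists (mklin (comp_linear g h)) => a; rewrite mklinE Em Hg Hh //.
Qed.
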